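(* Let $q\in\mathbb{C}^\times$ be not a root of unity and $k\in\mathbb{Z}_{>0}$. The polynomials $p_t(q)(x_1,\dots,x_k)$, $1\le t\le k$, are algebraically independent over $\mathbb{C}$.
   Context: For $t,k>0$, $p_t(q)(x_1,\dots,x_k)=\sum_{\lambda\vdash t,\ \ell(\lambda)\le k}q^{-\ell(\lambda)}(q-q^{-1})^{\ell(\lambda)-1}m_\lambda(x_1,\dots,x_k)\in\mathbb{C}[x_1,\dots,x_k]$, where $\lambda$ runs over partitions of $t$ with at most $k$ nonzero parts ($\ell(\lambda)$ the number of nonzero parts) and $m_\lambda$ is the monomial symmetric polynomial. *)

(* Defs.v *)
From HB Require Import structures.
From mathcomp Require Import all_boot all_order all_algebra.
From mathcomp Require Import reals.
From mathcomp Require Import complex.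
From mathcomp Require Import mpoly.
Set Implicit Arguments. Unset Strict Implicit. Unset Printing Implicit Defensive.
Import Order.TTheory GRing.Theory Num.Theory.
Local Open Scope ring_scope.

(* Partitions of t with at most k parts, encoded as bounded monomials
   lam : 'X_{1..k < t.+1} (i.e. k-tuples of naturals, padded by zeros)
   whose entries are nonincreasing and sum to t. *)
Definition is_partition_k (k t : nat) (lam : 'X_{1..k < t.+1}) : bool :=
  (mdeg lam == t) && sorted geq (val (val (val lam))).

Definition plen (k : nat) (m : 'X_{1..k}) : nat := count (fun a => a != 0)%N (val m).

Definition msymm (F : nzRingType) (k b : nat) (lam : 'X_{1..k < b}) : {mpoly F[k]} :=
  \sum_(a : 'X_{1..k < b} | perm_eq (val (val (val a))) (val (val (val lam)))) 'X_[(a : 'X_{1..k})].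

Definition p_poly (F : fieldType) (q : F) (k t : nat) : {mpoly F[k]} :=
  \sum_(lam : 'X_{1..k < t.+1} | is_partition_k lam)
     (q ^- (plen (lam : 'X_{1..k})) * (q - q^-1) ^+ (plen (lam : 'X_{1..k})).-1) *: @msymm F k t.+1 lam.

Definition alg_indep (F : fieldType) (n k : nat) (ps : k.-tuple {mpoly F[n]}) : Prop :=
  forall P : {mpoly F[k]}, P \mPo ps = 0 -> P = 0.

(* Main.v *)
Require Import Defs.
From HB Require Import structures.
From mathcomp Require Import all_boot all_order all_algebra.
From mathcomp Require Import reals complex mpoly.
From mathcomp Require Import ring.
Import Order.TTheory GRing.Theory Num.Theory.
Local Open Scope ring_scope.
Set Implicit Arguments. Unset Strict Implicit. Unset Printing Implicit Defensive.
Section Phi.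
Variables (F : fieldType) (k : nat).

Definition mkm N (a : {ffun 'I_k -> 'I_N}) : 'X_{1..k} := [multinom (a i : nat) | i < k].

Definition Phi (f : nat -> F) N t : {mpoly F[k]} :=
  \sum_(a : {ffun 'I_k -> 'I_N} | mdeg (mkm a) == t)
     (\prod_i f (a i)) *: 'X_[mkm a].

Lemma Phi_coef f N t m : (Phi f N t)@_m =
  ((mdeg m == t) && [forall i, (m i < N)%N])%:R * \prod_i f (m i).
Proof.
rewrite /Phi raddf_sum /= big_mkcond /=.
under eq_bigr => a _ do rewrite mcoeffZ mcoeffX.
case: (boolP [forall i, (m i < N)%N]) => [/forallP H | H].
  pose a0 : {ffun 'I_k -> 'I_N} := [ffun i => Ordinal (H i)].
  have ma0 : mkm a0 = m by apply/mnmP => i; rewrite mnmE ffunE.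
  rewrite (bigD1 a0) //; set S := (\big[_/_]_(i | _ && _) _).
  have -> : S = 0.
    rewrite /S; apply: big1 => a /andP[_ neq]; case: ifP => // _.
    case: eqP => [ma|]; last by rewrite mulr0.
    exfalso; move/eqP: neq; apply; apply/ffunP => i; apply/val_inj.
    by rewrite ffunE /= -ma mnmE.
  rewrite ma0 eqxx mulr1 andbT -[LHS]/(_ + 0) addr0.
  case: eqP => _; last by rewrite mul0r.
  rewrite mul1r; apply: eq_bigr => i _; by rewrite ffunE.

rewrite andbF mul0r big1 // => a _; case: ifP => // _.
case: eqP => [ma|]; last by rewrite mulr0.
exfalso; move/negP: H; apply; apply/forallP => i; by rewrite -ma mnmE.
Qed.

Local Notation PM := {poly {mpoly F[k]}}.

Definition kap (x : F) : PM := (x%:MP)%:P.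
Definition uu (i : 'I_k) : PM := ('X_i)%:P * 'X.
Definition piF (f : nat -> F) N i : PM := \sum_(n < N) kap (f n) * uu i ^+ n.

Lemma kap_prod I (r : seq I) (P : pred I) (f : I -> F) :
  \prod_(i <- r | P i) kap (f i) = kap (\prod_(i <- r | P i) f i).
Proof. by rewrite /kap !rmorph_prod. Qed.

Lemma prod_piF_coef f N t : (\prod_(i < k) piF f N i)`_t = Phi f N t.
Proof.
rewrite /piF bigA_distr_bigA /= coef_sum /Phi [RHS]big_mkcond /=.
apply: eq_bigr => a _.
have -> : \prod_(i < k) (kap (f (a i)) * uu i ^+ a i) =
   kap (\prod_(i < k) f (a i)) * ('X_[mkm a])%:P * 'X^(mdeg (mkm a)).
  rewrite big_split /= kap_prod -mulrA; congr (_ * _).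
  rewrite /uu; under eq_bigr => i _ do rewrite exprMn.
  rewrite big_split /= mdegE -prodrXr; congr (_ * _).
    rewrite mpolyXE_id rmorph_prod; apply: eq_bigr => i _.
    by rewrite rmorphXn /= mnmE.
  by apply: eq_bigr => i _; rewrite mnmE.
rewrite /kap -polyCM coefCM coefXn mul_mpolyC.
by case: eqP => [->|/eqP]; rewrite ?eqxx ?mulr1 // eq_sym => /negbTE ->; rewrite mulr0.
Qed.

Definition gg (r : F) (n : nat) : F := if n == 0%N then 1 else r.
Definition pw (b : F) (n : nat) : F := b ^+ n.

Lemma kap1 : kap 1 = 1. Proof. by rewrite /kap mpolyC1 polyC1. Qed.
Lemma kapB x y : kap (x - y) = kap x - kap y. Proof. by rewrite /kap mpolyCB polyCB. Qed.
Lemma kapN x : kap (- x) = - kap x. Proof. by rewrite /kap mpolyCN polyCN. Qed.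

Lemma piF_pw2 b i : piF (pw b) 2 i = 1 + kap b * uu i.
Proof. by rewrite /piF big_ord_recr big_ord1 /= /pw expr0 expr1 kap1 mul1r. Qed.

Lemma tele (x : PM) N : (\sum_(n < N) x ^+ n.+1) * (1 - x) = x - x ^+ N.+1.
Proof.
elim: N => [|N IH]; first by rewrite big_ord0 mul0r subrr.
rewrite big_ord_recr /= mulrDl IH; set y := x ^+ N.+1.
rewrite [x ^+ N.+2]exprS -/y; ring.
Qed.

Lemma piF_g r N i : piF (gg r) N.+1 i * piF (pw (-1)) 2 i =
  piF (pw (r - 1)) 2 i + 'X^(N.+1) * (- kap r * ('X_i ^+ N.+1)%:P).
Proof.
rewrite !piF_pw2 kapB kapN kap1.
have -> : piF (gg r) N.+1 i = 1 + kap r * \sum_(n < N) uu i ^+ n.+1.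
  rewrite /piF big_ord_recl /= /gg /= expr0 kap1 mulr1 mulr_sumr; congr (_ + _).
have h := tele (uu i) N.
have hu : uu i ^+ N.+1 = ('X_i ^+ N.+1)%:P * 'X^(N.+1) by rewrite /uu exprMn rmorphXn.
rewrite hu in h.
set S := \sum_(n < N) _ in h *.
set U := uu i in h *.
set X1 := ('X_i ^+ N.+1)%:P in h *.
set X2 := 'X^(N.+1) in h *.
have -> : (1 + kap r * S) * (1 + - 1 * U) = 1 - U + kap r * (S * (1 - U)) by ring.
rewrite h; ring.
Qed.

Lemma prod_trunc N (A B : 'I_k -> PM) :
  exists D, \prod_i (A i + 'X^N * B i) = \prod_i A i + 'X^N * D.
Proof.
apply: (big_rec2 (fun y1 y2 => exists D, y1 = y2 + 'X^N * D)).
  by exists 0; rewrite mulr0 addr0.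
move=> i y1 y2 _ [D ->].
exists (B i * y2 + A i * D + 'X^N * B i * D); ring.
Qed.

Lemma key_id r N t : (t <= N)%N ->
  \sum_(j < t.+1) Phi (gg r) N.+1 j * Phi (pw (-1)) 2 (t - j)%N = Phi (pw (r - 1)) 2 t.
Proof.
move=> tN.
under eq_bigr do rewrite -!prod_piF_coef.
rewrite -prod_piF_coef -coefM -big_split /=.
under eq_bigr do rewrite piF_g.
have [D ->] := prod_trunc N.+1 (fun i => piF (pw (r - 1)) 2 i)
   (fun i => - kap r * ('X_i ^+ N.+1)%:P).
by rewrite coefD coefXnM ltnS tN addr0.
Qed.

Lemma Phi_pw b s : Phi (pw b) 2 s = b ^+ s *: mesym k F s.
Proof.
apply/mpolyP => m; rewrite Phi_coef mcoeffZ mcoeff_mesym /mechar /pw prodrXr -mdegE.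
have -> : [forall i, (m i < 2)%N] = [forall i, (m i <= 1)%N].
  by apply: eq_forallb => i; rewrite ltnS.
by case: eqP => [->|]; rewrite ?mul0r ?mulr0 // mulrC.
Qed.

Lemma Phi_g0 r N : Phi (gg r) N.+1 0 = 1.
Proof.
apply/mpolyP => m; rewrite Phi_coef mcoeff1 mdeg_eq0.
case: eqP => [->|]; last by rewrite mul0r.
have -> : [forall i, ((0%MM : 'X_{1..k}) i < N.+1)%N] by apply/forallP => i; rewrite mnm0E.
by rewrite mul1r big1 // => i _; rewrite mnm0E.
Qed.

Lemma geq_total : total (geq : rel nat).
Proof. by move=> x y; rewrite /= leq_total. Qed.
Lemma geq_trans : transitive (geq : rel nat).
Proof. by move=> x y z /= h1 h2; apply: leq_trans h2 h1. Qed.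
Lemma geq_anti : antisymmetric (geq : rel nat).
Proof. by move=> x y /= h; apply/eqP; rewrite eqn_leq andbC. Qed.

Lemma mdeg_perm (m1 m2 : 'X_{1..k}) :
  perm_eq (val (val m1)) (val (val m2)) -> mdeg m1 = mdeg m2.
Proof. by move=> h; rewrite /mdeg (perm_big _ h). Qed.

Lemma plen_perm (m1 m2 : 'X_{1..k}) :
  perm_eq (val (val m1)) (val (val m2)) -> plen m1 = plen m2.
Proof. by move=> /permP h; rewrite /plen h. Qed.

Lemma p_coef (q : F) t m : (p_poly q k t)@_m =
  (mdeg m == t)%:R * (q ^- plen m * (q - q^-1) ^+ (plen m).-1).
Proof.
rewrite /p_poly raddf_sum /=.
under eq_bigr => lam _ do rewrite mcoeffZ /msymm raddf_sum /=.
under eq_bigr => lam _ do under eq_bigr => a _ do rewrite mcoeffX.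
case: (eqVneq (mdeg m) t) => [mt|mt]; last first.
  rewrite mul0r big1 // => lam /andP[/eqP plam _].
  rewrite big1 ?mulr0 // => a hp; case: eqP => // am.
  exfalso; move/eqP: mt; apply; by rewrite -am (mdeg_perm hp).
have hm : (mdeg m < t.+1)%N by rewrite mt ltnSn.
pose a0 : 'X_{1..k < t.+1} := BMultinom hm.
pose lamm : 'X_{1..k} := Multinom (sort_tuple geq (val m)).
have plm : perm_eq (val (val lamm)) (val (val m)) by rewrite /= perm_sort.
have hl : (mdeg lamm < t.+1)%N by rewrite (mdeg_perm plm) hm.
pose lam0 : 'X_{1..k < t.+1} := BMultinom hl.
have part0 : is_partition_k lam0.
  by rewrite /is_partition_k /= (mdeg_perm plm) mt eqxx /= sort_sorted //; exact: geq_total.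
rewrite (bigD1 lam0) //; set S := (\big[_/_]_(i | _ && _) _).
have -> : S = 0.
  rewrite /S; apply: big1 => lam /andP[plam nlam].
  rewrite big1 ?mulr0 // => a hp; case: eqP => // am; exfalso.
  move/negP: nlam; apply; apply/eqP.
  do 3 apply: val_inj.
  move/andP: plam => [_ slam].
  apply: (sorted_eq geq_trans geq_anti slam).
    by rewrite /= sort_sorted //; exact: geq_total.
  rewrite perm_sym (perm_trans plm) // -am; exact: hp.
rewrite -[LHS]/(_ + 0) addr0 mul1r.
rewrite (bigD1 a0); last by rewrite /= perm_sym; exact: plm.
set S2 := (\big[_/_]_(i | _ && _) _).
have -> : S2 = 0.
  rewrite /S2; apply: big1 => a /andP[_ na].
  case: eqP => // am; exfalso; move/negP: na; apply; apply/eqP.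
  by apply: val_inj; rewrite /= am.
rewrite -[X in _ * X]/(_ + 0) addr0 /= eqxx mulr1.
by rewrite (plen_perm plm).
Qed.

Lemma prod_gg_seq r (s : seq nat) :
  \prod_(x <- s) gg r x = r ^+ count (fun a => a != 0%N) s.
Proof.
elim: s => [|x s IH]; first by rewrite big_nil.
rewrite big_cons IH /= /gg; case: x => [|x] /=; first by rewrite mul1r.
by rewrite exprS.
Qed.

Lemma prod_gg r (m : 'X_{1..k}) : \prod_i gg r (m i) = r ^+ plen m.
Proof. by rewrite /plen -prod_gg_seq big_tuple. Qed.

Lemma sum_count0 (s : seq nat) : count (fun a => a != 0%N) s = 0%N -> (\sum_(i <- s) i = 0)%N.
Proof.
elim: s => [|x s IH]; first by rewrite big_nil.
rewrite big_cons /=; case: eqP => [->|] //= h; by rewrite IH.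
Qed.

Lemma Phi_gp (q : F) N t : q != 0 -> (0 < t <= N)%N ->
  Phi (gg ((q - q^-1) / q)) N.+1 t = (q - q^-1) *: p_poly q k t.
Proof.
move=> qn /andP[t0 tN].
apply/mpolyP => m; rewrite Phi_coef mcoeffZ p_coef prod_gg.
case: (eqVneq (mdeg m) t) => [mt|_]; last by rewrite /= !mul0r mulr0.
have -> : [forall i, (m i < N.+1)%N].
  apply/forallP => i; rewrite ltnS (leq_trans _ tN) // -mt mdegE.
  by rewrite (bigD1 i) //= leq_addr.
case hl: (plen m) => [|l].
  move: hl; rewrite /plen => /sum_count0 h.
  by move: t0; rewrite -mt /mdeg h.
rewrite /= !mul1r expr_div_n exprS.
field.
by rewrite expf_neq0.
Qed.

Definition Y t : {mpoly F[k]} := \sum_(i < k | i.+1 == t) 'X_i.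

Lemma Y0 : Y 0 = 0.
Proof. by rewrite /Y big_pred0. Qed.

Lemma XY (i : 'I_k) : 'X_i = Y i.+1.
Proof. by rewrite /Y (big_pred1 i) // => j /=; rewrite eqSS. Qed.

Lemma compY (f : nat -> {mpoly F[k]}) t : (0 < t <= k)%N ->
  Y t \mPo [tuple f i.+1 | i < k] = f t.
Proof.
case: t => [//|t] /= tk.
rewrite -[t]/(nat_of_ord (Ordinal tk)) -XY comp_mpolyXU.
by rewrite -tnth_nth tnth_mktuple.
Qed.

Lemma comp_assoc (P : {mpoly F[k]}) (G L : k.-tuple {mpoly F[k]}) :
  (P \mPo G) \mPo L = P \mPo [tuple (tnth G i) \mPo L | i < k].
Proof.
rewrite (comp_mpolyEX P G) raddf_sum [RHS]comp_mpolyEX; apply: eq_bigr => m _.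
rewrite -[LHS]/(comp_mpoly L _) comp_mpolyZ; congr (_ *: _); rewrite !comp_mpolyX rmorph_prod.
by apply: eq_bigr => i _; rewrite rmorphXn tnth_mktuple.
Qed.

Section Alg.
Variable q : F.
Hypothesis qn : q != 0.
Hypothesis qroot : forall n, (0 < n)%N -> q ^+ n != 1.

Let d := q - q^-1.
Let r := (q - q^-1) / q.
Definition alpha t := (r - 1) ^+ t - (-1) ^+ t.

Lemma d_neq0 : d != 0.
Proof.
apply/eqP => h; move: (qroot (isT : (0 < 2)%N)); rewrite expr2.
have : q * d = 0 by rewrite h mulr0.
rewrite /d mulrBr mulfV // => /eqP; rewrite subr_eq0 eq_sym => ->.
by [].
Qed.

Lemma alpha_neq0 t : (0 < t)%N -> alpha t != 0.
Proof.
move=> t0; rewrite /alpha.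
have hr : r - 1 = - (q ^+ 2)^-1.
  rewrite /r /d; field. done.
have -> : (r - 1) ^+ t = (-1) ^+ t * ((q ^+ 2)^-1) ^+ t.
  by rewrite hr (exprNn ((q ^+ 2)^-1)).
rewrite subr_eq0.
apply/negP => /eqP h.
have : (q ^+ 2)^-1 ^+ t = 1.
  have h1 : (-1) ^+ t != 0 :> F by rewrite expf_neq0 // oppr_eq0 oner_eq0.
  by apply: (mulfI h1); rewrite h mulr1.
rewrite exprVn -exprM => /eqP; rewrite invr_eq1 => /eqP.
by apply/eqP; apply: qroot; rewrite muln_gt0 t0.
Qed.

Definition ptuple := [tuple p_poly q k i.+1 | i < k].
Definition psi (P : {mpoly F[k]}) := P \mPo ptuple.


Fixpoint Gf n t : {mpoly F[k]} :=
  match n with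
  | 0 => 0
  | n'.+1 => (alpha t)^-1 *: (d *: Y t +
      \sum_(1 <= j < t) (d * (-1) ^+ (t - j)%N) *: (Y j * Gf n' (t - j)%N))
  end.

Lemma ident t : (0 < t <= k)%N ->
  d *: p_poly q k t + \sum_(1 <= j < t) (d * (-1) ^+ (t - j)%N) *:
     (p_poly q k j * mesym k F (t - j)%N) = alpha t *: mesym k F t.
Proof.
move=> /andP[t0 tk].
have := key_id r tk.
rewrite -(big_mkord (fun _ => true) (fun j => Phi (gg r) k.+1 j * Phi (pw (-1)) 2 (t - j)%N)) big_ltn // big_nat_recr //=.
rewrite (eq_big_nat _ _ (F2 := fun j => (d * (-1) ^+ (t - j)%N) *:
     (p_poly q k j * mesym k F (t - j)%N))); last first.
  move=> j /andP[j1 jt].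
  rewrite Phi_gp ?j1 ?(ltnW (leq_trans jt tk)) // Phi_pw.
  by rewrite -scalerAl -scalerAr scalerA.
rewrite Phi_g0 mul1r subn0 subnn !Phi_pw Phi_gp ?t0 ?tk //.
rewrite expr0 mesym0E scale1r mulr1 => h.
rewrite /alpha -/r [RHS]scalerBl -h.
set A := (_ *: mesym k F t); set S := (\sum_(_ <= _ < _) _); set D := (_ *: p_poly q k t).
by rewrite addrAC subrr add0r addrC.
Qed.


Lemma psiY t : (0 < t <= k)%N -> psi (Y t) = p_poly q k t.
Proof. move=> h; exact: (compY (fun t => p_poly q k t) h). Qed.

Lemma claimA n t : (0 < t <= n)%N -> (t <= k)%N -> psi (Gf n t) = mesym k F t.
Proof.
elim: n t => [|n IH] t; first by case: t.
move=> /andP[t0 tn] tk /=.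
rewrite /psi linearZ /= raddfD /= linearZ /= -/(psi _) psiY ?t0 //.
have hs : forall (I : Type) r0 (P : pred I) (f : I -> {mpoly F[k]}),
  (\sum_(i <- r0 | P i) f i) \mPo ptuple = \sum_(i <- r0 | P i) (f i \mPo ptuple).
  by move=> *; apply: raddf_sum.
rewrite hs.
rewrite (eq_big_nat _ _ (F2 := fun j => (d * (-1) ^+ (t - j)%N) *:
     (p_poly q k j * mesym k F (t - j)%N))); last first.
  move=> j /andP[j1 jt].
  rewrite linearZ /= rmorphM /= -/(psi _) -/(psi _) psiY ?j1 ?(ltnW (leq_trans jt tk)) //.
  rewrite IH // ?subn_gt0 ?jt //; last by rewrite (leq_trans (leq_subr _ _)) // ltnW.
  by rewrite leq_subLR (leq_trans tn) // -add1n leq_add2r.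
rewrite ident ?t0 // scalerA mulVf ?scale1r //; exact: alpha_neq0.
Qed.

Lemma Gf_m0 m : Gf m 0 = 0.
Proof. by case: m => [|m] //=; rewrite Y0 scaler0 add0r big_geq ?scaler0. Qed.

Lemma fuel n m t : (t <= n)%N -> (t <= m)%N -> Gf n t = Gf m t.
Proof.
elim: n m t => [|n IH] m t.
  by rewrite leqn0 => /eqP -> _; rewrite !Gf_m0.
case: m => [|m]; first by rewrite leqn0 => _ /eqP ->; rewrite !Gf_m0.
move=> tn tm /=; congr (_ *: (_ + _)).
apply: eq_big_nat => j /andP[j1 jt]; congr (_ *: (_ * _)); apply: IH.
  by rewrite leq_subLR (leq_trans tn) // -add1n leq_add2r.
by rewrite leq_subLR (leq_trans tm) // -add1n leq_add2r.
Qed.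

Definition GG := [tuple Gf k i.+1 | i < k].
Definition Im (x : {mpoly F[k]}) := exists P, x = P \mPo GG.

Lemma Im0 : Im 0. Proof. by exists 0; rewrite comp_mpoly0. Qed.
Lemma Im1 : Im 1. Proof. by exists 1; rewrite comp_mpoly1. Qed.
Lemma ImD x y : Im x -> Im y -> Im (x + y).
Proof. by move=> [P ->] [Q ->]; exists (P + Q); rewrite raddfD. Qed.
Lemma ImB x y : Im x -> Im y -> Im (x - y).
Proof. by move=> [P ->] [Q ->]; exists (P - Q); rewrite raddfB. Qed.
Lemma ImM x y : Im x -> Im y -> Im (x * y).
Proof. by move=> [P ->] [Q ->]; exists (P * Q); rewrite rmorphM. Qed.
Lemma ImZ a x : Im x -> Im (a *: x).
Proof. by move=> [P ->]; exists (a *: P); rewrite linearZ. Qed.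
Lemma ImX x n : Im x -> Im (x ^+ n).
Proof. move=> h; elim: n => [|n IH]; [exact: Im1 | rewrite exprS; exact: ImM]. Qed.
Lemma Im_sum I (r0 : seq I) (P : pred I) (f : I -> {mpoly F[k]}) :
  (forall i, P i -> Im (f i)) -> Im (\sum_(i <- r0 | P i) f i).
Proof. move=> h; apply: big_ind => //; [exact: Im0 | exact: ImD]. Qed.
Lemma Im_prod I (r0 : seq I) (P : pred I) (f : I -> {mpoly F[k]}) :
  (forall i, P i -> Im (f i)) -> Im (\prod_(i <- r0 | P i) f i).
Proof. move=> h; apply: big_ind => //; [exact: Im1 | exact: ImM]. Qed.

Lemma ImG t : (0 < t <= k)%N -> Im (Gf k t).
Proof. move=> h; exists (Y t); by rewrite /GG (compY (fun t => Gf k t) h). Qed.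

Lemma Gf_unfold n t : (t <= n.+1)%N -> Gf n.+1 t = (alpha t)^-1 *: (d *: Y t +
      \sum_(1 <= j < t) (d * (-1) ^+ (t - j)%N) *: (Y j * Gf n.+1 (t - j)%N)).
Proof.
move=> tn; rewrite [LHS]/=; congr (_ *: (_ + _)); apply: eq_big_nat => j /andP[j1 jt].
congr (_ *: (_ * _)); apply: fuel.
  by rewrite leq_subLR (leq_trans tn) // -add1n leq_add2r.
exact: (leq_trans (leq_subr _ _) tn).
Qed.

Lemma claimB n t : (0 < t <= n)%N -> (t <= k)%N -> Im (Y t).
Proof.
elim: n t => [|n IH] t; first by case: t.
move=> /andP[t0 tn] tk.
have [k' ek] : exists k', k = k'.+1 by case: (k) (leq_trans t0 tk) => // k' _; exists k'.
have e := Gf_unfold (t := t) (n := k').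
rewrite -ek in e; have {e} e := e (tk : (t <= k)%N).
have -> : Y t = d^-1 *: (alpha t *: Gf k t -
   \sum_(1 <= j < t) (d * (-1) ^+ (t - j)%N) *: (Y j * Gf k (t - j)%N)).
  rewrite e scalerA mulfV ?scale1r; last exact: alpha_neq0.
  by rewrite addrK scalerA mulVf ?scale1r //; exact: d_neq0.
apply: ImZ; apply: ImB; first by apply: ImZ; apply: ImG; rewrite t0.
rewrite big_seq; apply: Im_sum => j; rewrite mem_index_iota => /andP[j1 jt].
apply: ImZ; apply: ImM.
  apply: (IH j); last by rewrite (leq_trans (ltnW jt)).
  by rewrite j1 -ltnS (leq_trans jt).
apply: ImG; rewrite subn_gt0 jt /=.
by rewrite (leq_trans (leq_subr _ _)).
Qed.

Lemma claimC P : Im P.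
Proof.
rewrite [P]mpolyE; apply: Im_sum => m _; apply: ImZ.
rewrite mpolyXE_id; apply: Im_prod => i _; apply: ImX.
rewrite XY; apply: (claimB (n := i.+1)) => //; by rewrite leqnn.
Qed.

Lemma GGpsi : [tuple (tnth GG i) \mPo ptuple | i < k] = [tuple mesym k F i.+1 | i < k].
Proof.
apply: eq_from_tnth => i; rewrite !tnth_mktuple -/(psi _) claimA //; by rewrite ltn_ord.
Qed.

Lemma psi_inj P : psi P = 0 -> P = 0.
Proof.
have [Q ->] := claimC P.
rewrite /psi comp_assoc GGpsi => /msym_fundamental_un0 ->.
by rewrite comp_mpoly0.
Qed.

End Alg.
End Phi.

Theorem mainTheorem17 (R : realType) (q : R[i]) (k : nat) :
  q != 0 ->
  (forall n : nat, (0 < n)%N -> ~~ n.-unity_root q) ->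
  (0 < k)%N ->
  alg_indep [tuple p_poly q k (i.+1) | i < k].
Proof.
move=> qn qr _ P hP.
have qroot : forall n, (0 < n)%N -> q ^+ n != 1.
  by move=> n n0; have := qr n n0; rewrite unity_rootE.
exact: (psi_inj qn qroot hP).
Qed.
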